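(* Let $(a_n)_{n\ge1}$ be an increasing sequence of positive integers and $x\in\mathbb{R}^d$. Then for every nonempty dyadic cube $\lambda\subseteq[0,1)^d$, $\liminf_{j\to\infty}2^{-dj}\#\mathrm{M}((\{a_nx\})_{n\ge1};\lambda,j)\ge\dfrac{\kappa_*(x)^d\,\underline{\delta}((a_n))}{2^d\mathcal{L}^d(\lambda)}\,\underline{\rho}((a_nx)_{n\ge1};\lambda)$.
   Context: $\mathcal{L}^d$ is Lebesgue measure; $\{z\}$ is the coordinatewise fractional part. For $z\in\mathbb{R}^d$, $\|z\|=\inf_{p\in\mathbb{Z}^d}|z-p|_\infty$, and $\kappa_*(x)=\inf_{q\in\mathbb{N}}q^{1/d}\|qx\|$. $\underline{\delta}((a_n))=\liminf_{N\to\infty}\frac1N\#\{n\ge1:a_n\le N\}$. For a sequence $(y_n)$ in $\mathbb{R}^d$ and a nonempty dyadic cube $\lambda\subseteq[0,1)^d$, $\underline{\rho}((y_n)_{n\ge1};\lambda)=\liminf_{N\to\infty}\frac1N\#\{n\in\{1,\dots,N\}:\{y_n\}\in\lambda\}$. A dyadic cube is $\lambda=2^{-j}(k+[0,1)^d)$, $j\in\mathbb{Z}$, $k\in\mathbb{Z}^d$, with generation $\langle\lambda\rangle=j$; $\mathrm{M}((x_n)_{n\ge1};\lambda,j)$ is the set of dyadic cubes $\lambda'\subseteq\lambda$ of generation $\langle\lambda\rangle+j$ such that $x_n\in\lambda'$ for some $n\le2^{d\langle\lambda'\rangle}$. *)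

(* Defs.v *)
From Stdlib Require Import Reals Lra Lia ZArith Arith List ClassicalEpsilon.
Open Scope R_scope.

(* [the P] is "the" real satisfying P (chosen by Hilbert's epsilon);
   used only for properties with a unique witness (inf, sup, liminf, card). *)
Definition the {A : Type} (i : inhabited A) (P : A -> Prop) : A := epsilon i P.

Definition is_lower_bound (E : R -> Prop) (m : R) : Prop := forall y, E y -> m <= y.
Definition is_glb (E : R -> Prop) (m : R) : Prop :=
  is_lower_bound E m /\ (forall b, is_lower_bound E b -> b <= m).

Definition Inf (E : R -> Prop) : R := the (inhabits 0) (is_glb E).
Definition Sup (E : R -> Prop) : R := the (inhabits 0) (is_lub E).

(* liminf_{n -> oo} u n  :=  sup_{N >= 1} inf_{n >= N} u n
   (sequences are indexed from 1, as in the paper) *)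
Definition liminf (u : nat -> R) : R :=
  Sup (fun y => exists N : nat, (1 <= N)%nat /\
         y = Inf (fun z => exists n : nat, (N <= n)%nat /\ z = u n)).

Definition has_card {T : Type} (P : T -> Prop) (m : nat) : Prop :=
  exists l : list T, NoDup l /\ (forall t, In t l <-> P t) /\ length l = m.
Definition card {T : Type} (P : T -> Prop) : nat := the (inhabits 0%nat) (has_card P).

(* ---------- vectors of R^d : functions nat -> R, coordinates 0..d-1 ---------- *)
Definition vec := nat -> R.

Definition frac_vec (z : vec) : vec := fun i => frac_part (z i).

Definition scal (c : R) (z : vec) : vec := fun i => c * z i.

Fixpoint supnorm (d : nat) (v : vec) : R :=
  match d with
  | O => 0
  | S d' => Rmax (supnorm d' v) (Rabs (v d'))
  end.

Definition distZ (d : nat) (z : vec) : R :=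
  Inf (fun t => exists p : nat -> Z, t = supnorm d (fun i => z i - IZR (p i))).

Definition kappa_star (d : nat) (x : vec) : R :=
  Inf (fun t => exists q : nat, (1 <= q)%nat /\
         t = Rpower (INR q) (1 / INR d) * distZ d (scal (INR q) x)).

Definition lower_density (a : nat -> nat) : R :=
  liminf (fun N => INR (card (fun n : nat => (1 <= n)%nat /\ (a n <= N)%nat)) / INR N).

(* The dyadic cube 2^{-j}(k + [0,1)^d), j in Z, k in Z^d (k a list of length d);
   its generation is j. *)
Definition in_cube (d : nat) (j : Z) (k : list Z) (y : vec) : Prop :=
  forall i, (i < d)%nat ->
    powerRZ 2 (- j) * IZR (nth i k 0%Z) <= y i /\
    y i < powerRZ 2 (- j) * (IZR (nth i k 0%Z) + 1).

Definition in_unit_cube (d : nat) (y : vec) : Prop :=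
  forall i, (i < d)%nat -> 0 <= y i /\ y i < 1.

Definition cube_measure (d : nat) (j : Z) : R := powerRZ 2 (- (Z.of_nat d * j)).

Definition lower_freq (d : nat) (y : nat -> vec) (j : Z) (k : list Z) : R :=
  liminf (fun N => INR (card (fun n : nat => (1 <= n <= N)%nat /\ in_cube d j k (frac_vec (y n))))
                   / INR N).

Definition Mset (d : nat) (xs : nat -> vec) (j : Z) (k : list Z) (J : nat) (k' : list Z) : Prop :=
  length k' = d /\
  (forall y, in_cube d (j + Z.of_nat J) k' y -> in_cube d j k y) /\
  exists n : nat, (1 <= n)%nat /\
    INR n <= powerRZ 2 (Z.of_nat d * (j + Z.of_nat J)) /\
    in_cube d (j + Z.of_nat J) k' (xs n).

(* Main.v *)
Require Import Defs.
From Stdlib Require Import Reals ZArith Arith List.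
From Stdlib Require Import Lra Lia Classical ClassicalEpsilon.
Open Scope R_scope.

Lemma the_spec {A} (i : inhabited A) (P : A -> Prop) : (exists x, P x) -> P (the i P).
Proof. intro H. unfold the. apply epsilon_spec. exact H. Qed.

Lemma glb_exists (E : R -> Prop) : (exists y, E y) -> (exists m, is_lower_bound E m) ->
  exists m, is_glb E m.
Proof.
  intros [y Ey] [m Hm].
  set (E' := fun z => E (- z)).
  assert (bound E') as Hb.
  { exists (- m). intros z Hz. unfold E' in Hz. apply Hm in Hz. lra. }
  destruct (completeness E' Hb) as [s [Hs1 Hs2]].
  { exists (- y). unfold E'. rewrite Ropp_involutive. exact Ey. }
  exists (- s). split.
  - intros z Hz. assert (E' (- z)) by (unfold E'; rewrite Ropp_involutive; exact Hz).
    apply Hs1 in H. lra.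
  - intros b Hb'. assert (s <= - b); [|lra].
    apply Hs2. intros z Hz. apply Hb' in Hz. lra.
Qed.

Lemma Inf_spec (E : R -> Prop) : (exists y, E y) -> (exists m, is_lower_bound E m) ->
  is_glb E (Inf E).
Proof. intros H1 H2. unfold Inf. apply the_spec. apply glb_exists; auto. Qed.

Lemma Sup_spec (E : R -> Prop) : (exists y, E y) -> bound E -> is_lub E (Sup E).
Proof.
  intros H1 H2. unfold Sup. apply the_spec.
  destruct (completeness E H2 H1) as [s Hs]. eauto.
Qed.

Section LI.
Variable u : nat -> R.
Variable lo hi : R.
Hypothesis Hb : forall n, lo <= u n <= hi.

Let tail (N : nat) := fun z => exists n : nat, (N <= n)%nat /\ z = u n.
Let S := fun y => exists N : nat, (1 <= N)%nat /\ y = Inf (tail N).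

Lemma tail_glb N : is_glb (tail N) (Inf (tail N)).
Proof.
  apply Inf_spec. exists (u N). exists N. split; auto.
  exists lo. intros z [n [_ ->]]. apply Hb.
Qed.

Lemma S_lub : is_lub S (Sup S).
Proof.
  apply Sup_spec. exists (Inf (tail 1)). exists 1%nat. split; auto.
  exists hi. intros y [N [_ ->]]. destruct (tail_glb N) as [H1 _].
  assert (Inf (tail N) <= u N) by (apply H1; exists N; auto). specialize (Hb N). lra.
Qed.

Lemma liminf_ev : forall eps, 0 < eps -> exists N, forall n, (N <= n)%nat -> u n > liminf u - eps.
Proof.
  intros eps He. change (liminf u) with (Sup S).
  destruct S_lub as [H1 H2].
  apply NNPP. intro Hn.
  assert (Sup S <= Sup S - eps); [|lra].
  apply H2. intros y [N [HN ->]].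
  apply Rnot_lt_le. intro Hlt. apply Hn. exists N. intros n Hn'.
  destruct (tail_glb N) as [H3 _].
  assert (Inf (tail N) <= u n) by (apply H3; exists n; auto). lra.
Qed.

Lemma liminf_ge (c : R) : (forall eps, 0 < eps -> exists N, forall n, (N <= n)%nat -> u n >= c - eps) ->
  liminf u >= c.
Proof.
  intros H. change (liminf u) with (Sup S).
  destruct S_lub as [H1 H2].
  apply Rnot_lt_ge. intro Hlt.
  destruct (H ((c - Sup S)/2)) as [N HN]; [lra|].
  assert (Inf (tail (max N 1)) <= Sup S).
  { apply H1. exists (max N 1). split; [apply Nat.le_max_r|auto]. }
  assert (c - (c - Sup S)/2 <= Inf (tail (max N 1))).
  { apply (tail_glb (max N 1)). intros z [n [Hn ->]]. apply Rge_le, HN. eapply Nat.le_trans; [apply Nat.le_max_l|exact Hn]. }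
  lra.
Qed.

Lemma liminf_le (B : R) : (forall n, u n <= B) -> liminf u <= B.
Proof.
  intros H. change (liminf u) with (Sup S).
  destruct S_lub as [H1 H2]. apply H2. intros y [N [_ ->]].
  destruct (tail_glb N) as [H3 _].
  assert (Inf (tail N) <= u N) by (apply H3; exists N; auto). specialize (H N). lra.
Qed.
End LI.

Lemma filter_ex {T} (l : list T) (P : T -> Prop) :
  exists l', NoDup l' /\ (forall t, In t l' <-> In t l /\ P t) /\ (length l' <= length l)%nat.
Proof.
  induction l as [|a l IH].
  - exists nil. split; [constructor|split; [intros t; simpl; tauto| simpl; lia]].
  - destruct IH as [l' [H1 [H2 H3]]].
    destruct (classic (P a /\ ~ In a l')) as [Hc|Hc].
    + exists (a :: l'). split; [|split; [intros t; split|]].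
      * constructor; tauto.
      * intros [<-|Ht]; simpl; [tauto|]. apply H2 in Ht. tauto.
      * intros [[<-|Ht] HP]; simpl; [tauto|]. right. apply H2. tauto.
      * simpl. lia.
    + exists l'. split; [auto|split; [intros t; split|]].
      * intros Ht. apply H2 in Ht. simpl. tauto.
      * intros [[<-|Ht] HP]. { apply NNPP. intro. apply Hc. tauto. }
        apply H2. tauto.
      * simpl. lia.
Qed.

Lemma has_card_unique {T} (P : T -> Prop) m1 m2 : has_card P m1 -> has_card P m2 -> m1 = m2.
Proof.
  intros [l1 [N1 [I1 <-]]] [l2 [N2 [I2 <-]]].
  apply Nat.le_antisymm; apply NoDup_incl_length; auto; intros t Ht.
  apply I2, I1, Ht. apply I1, I2, Ht.
Qed.

Lemma card_fin {T} (P : T -> Prop) (l : list T) : (forall t, P t -> In t l) ->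
  exists l', NoDup l' /\ (forall t, In t l' <-> P t) /\ card P = length l' /\ (length l' <= length l)%nat.
Proof.
  intros Hl. destruct (filter_ex l P) as [l' [H1 [H2 H3]]].
  assert (Hc : has_card P (length l')).
  { exists l'. repeat split; auto; intro Ht. apply H2 in Ht; tauto. apply H2; auto. }
  exists l'. repeat split; auto; try (intro Ht; apply H2 in Ht; tauto).
  - intros; apply H2; auto.
  - apply (has_card_unique P). unfold card. apply the_spec. eauto. auto.
Qed.

Lemma card_le_seq (P : nat -> Prop) N : (forall n, P n -> (1 <= n <= N)%nat) -> (card P <= N)%nat.
Proof.
  intros H. destruct (card_fin P (seq 1 N)) as [l' [_ [_ [-> Hl]]]].
  - intros t Ht. apply in_seq. apply H in Ht. lia.
  - rewrite length_seq in Hl. exact Hl.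
Qed.

Lemma supnorm_nonneg d v : 0 <= supnorm d v.
Proof. induction d; simpl. lra. eapply Rle_trans; [exact IHd|apply Rmax_l]. Qed.

Lemma supnorm_lt d v b : 0 < b -> (forall i, (i < d)%nat -> Rabs (v i) < b) -> supnorm d v < b.
Proof.
  intros Hb H. induction d; simpl. lra.
  apply Rmax_lub_lt. apply IHd. intros; apply H; lia. apply H; lia.
Qed.

Lemma supnorm_le d v b : 0 <= b -> (forall i, (i < d)%nat -> Rabs (v i) <= b) -> supnorm d v <= b.
Proof.
  intros Hb H. induction d; simpl. lra.
  apply Rmax_lub. apply IHd. intros; apply H; lia. apply H; lia.
Qed.

Lemma distZ_glb d z : is_glb (fun t => exists p : nat -> Z, t = supnorm d (fun i => z i - IZR (p i))) (distZ d z).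
Proof.
  apply Inf_spec. exists (supnorm d (fun i => z i - IZR 0)). exists (fun _ => 0%Z). auto.
  exists 0. intros t [p ->]. apply supnorm_nonneg.
Qed.

Lemma distZ_nonneg d z : 0 <= distZ d z.
Proof.
  destruct (distZ_glb d z) as [_ H]. apply H. intros t [p ->]. apply supnorm_nonneg.
Qed.

Lemma distZ_le d z p : distZ d z <= supnorm d (fun i => z i - IZR (p i)).
Proof. destruct (distZ_glb d z) as [H _]. apply H. eauto. Qed.

Lemma kappa_glb d x : is_glb (fun t => exists q : nat, (1 <= q)%nat /\
         t = Rpower (INR q) (1 / INR d) * distZ d (scal (INR q) x)) (kappa_star d x).
Proof.
  apply Inf_spec. eexists. exists 1%nat. split; [lia|reflexivity].
  exists 0. intros t [q [_ ->]]. apply Rmult_le_pos.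
  unfold Rpower. left; apply exp_pos. apply distZ_nonneg.
Qed.

Lemma kappa_nonneg d x : 0 <= kappa_star d x.
Proof.
  destruct (kappa_glb d x) as [_ H]. apply H. intros t [q [_ ->]]. apply Rmult_le_pos.
  unfold Rpower. left; apply exp_pos. apply distZ_nonneg.
Qed.

Lemma kappa_le d x q : (1 <= q)%nat ->
  kappa_star d x <= Rpower (INR q) (1 / INR d) * distZ d (scal (INR q) x).
Proof. intros Hq. destruct (kappa_glb d x) as [H _]. apply H. eauto. Qed.

Lemma round_half r : exists p : Z, Rabs (r - IZR p) <= 1/2.
Proof.
  destruct (base_Int_part r) as [H1 H2].
  destruct (Rle_dec (r - IZR (Int_part r)) (1/2)).
  - exists (Int_part r). rewrite Rabs_right; lra.
  - exists (Int_part r + 1)%Z. rewrite plus_IZR. rewrite Rabs_left1; lra.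
Qed.

Lemma kappa_half d x : kappa_star d x <= 1/2.
Proof.
  eapply Rle_trans; [apply (kappa_le d x 1); lia|].
  assert (Rpower (INR 1) (1 / INR d) = 1) as ->.
  { simpl. unfold Rpower. rewrite ln_1, Rmult_0_r. apply exp_0. }
  rewrite Rmult_1_l.
  destruct (choice (fun i p => Rabs (scal (INR 1) x i - IZR p) <= 1/2)) as [p Hp].
  { intro i. apply round_half. }
  eapply Rle_trans; [apply (distZ_le d _ p)|]. apply supnorm_le. lra. intros; apply Hp.
Qed.

Lemma a_ge (a : nat -> nat) :
  (forall n, (1 <= n)%nat -> (0 < a n)%nat) ->
  (forall n m, (1 <= n)%nat -> (n < m)%nat -> (a n < a m)%nat) ->
  forall n, (n <= a n)%nat.
Proof.
  intros H0 H1 n. induction n. lia.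
  destruct n. specialize (H0 1%nat). lia.
  specialize (H1 (S n) (S (S n))). lia.
Qed.

Lemma p2_pos n : 0 < 2 ^ n.
Proof. apply pow_lt. lra. Qed.

Lemma powerRZ_nat n : powerRZ 2 (Z.of_nat n) = 2 ^ n.
Proof. rewrite pow_powerRZ. reflexivity. Qed.

Lemma powerRZ_negnat n : powerRZ 2 (- Z.of_nat n) = / 2 ^ n.
Proof. rewrite powerRZ_neg', powerRZ_nat. reflexivity. Qed.

Lemma j_nonneg d j k : (1 <= d)%nat -> (forall y, in_cube d j k y -> in_unit_cube d y) -> (0 <= j)%Z.
Proof.
  intros Hd H. destruct (Z_lt_le_dec j 0) as [Hj|]; [|auto]. exfalso.
  assert (Ht : 2 <= powerRZ 2 (- j)).
  { replace (- j)%Z with (Z.of_nat (S (Z.to_nat (- j - 1)))) by lia.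
    rewrite powerRZ_nat. simpl. pose proof (pow_R1_Rle 2 (Z.to_nat (- j - 1))). lra. }
  set (t := powerRZ 2 (- j)) in *.
  assert (H1 : in_unit_cube d (fun i => t * IZR (nth i k 0%Z))).
  { apply H. intros i Hi. cbv beta. fold t. split; nra. }
  assert (H2 : in_unit_cube d (fun i => t * (IZR (nth i k 0%Z) + 1/2))).
  { apply H. intros i Hi. cbv beta. fold t. split; nra. }
  specialize (H1 0%nat ltac:(lia)). specialize (H2 0%nat ltac:(lia)). simpl in *. nra.
Qed.

Fixpoint allvec (d B : nat) : list (list Z) :=
  match d with
  | O => nil :: nil
  | S d' => flat_map (fun i => map (cons (Z.of_nat i)) (allvec d' B)) (seq 0 B)
  end.

Lemma flat_map_len {A} (s : list nat) (L : list (list A)) (f : nat -> A) :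
  length (flat_map (fun i => map (cons (f i)) L) s) = (length s * length L)%nat.
Proof. induction s; simpl. auto. rewrite length_app, length_map, IHs. lia. Qed.

Lemma allvec_len d B : length (allvec d B) = (B ^ d)%nat.
Proof.
  induction d; simpl. auto. rewrite (flat_map_len _ _ Z.of_nat), length_seq, IHd. lia.
Qed.

Lemma allvec_in d B k : length k = d -> (forall i, (i < d)%nat -> (0 <= nth i k 0 < Z.of_nat B)%Z) ->
  In k (allvec d B).
Proof.
  revert k. induction d; intros k Hl H.
  - destruct k; simpl in *; [auto|discriminate].
  - destruct k as [|z k]; simpl in Hl; [discriminate|]. simpl.
    apply in_flat_map. exists (Z.to_nat z).
    pose proof (H 0%nat ltac:(lia)) as H0. simpl in H0. split.
    + apply in_seq. lia.
    + apply in_map_iff. exists k. split. f_equal. lia.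
      apply IHd. lia. intros i Hi. apply (H (S i)). lia.
Qed.

Lemma pigeon {A B} (eqB : forall x y : B, {x = y} + {x <> y}) (f : A -> B) (K : nat) :
  forall (lM : list B) (T : list A), NoDup T -> (forall t, In t T -> In (f t) lM) ->
  (forall c (S : list A), NoDup S -> (forall t, In t S -> In t T /\ f t = c) -> (length S <= K)%nat) ->
  (length T <= K * length lM)%nat.
Proof.
  induction lM as [|c lM IH]; intros T HT Hin Hf.
  - destruct T as [|t T]; simpl. lia. destruct (Hin t). left; auto.
  - set (T1 := filter (fun t => if eqB (f t) c then true else false) T).
    set (T2 := filter (fun t => if eqB (f t) c then false else true) T).
    assert (Hlen : length T = (length T1 + length T2)%nat).
    { unfold T1, T2. clear. induction T; simpl. auto. destruct (eqB (f a) c); simpl; lia. }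
    assert (length T1 <= K)%nat.
    { apply (Hf c). apply NoDup_filter; auto. intros t Ht. unfold T1 in Ht.
      apply filter_In in Ht. destruct Ht. destruct (eqB (f t) c); [auto|discriminate]. }
    assert (length T2 <= K * length lM)%nat.
    { apply IH. apply NoDup_filter; auto.
      - intros t Ht. unfold T2 in Ht. apply filter_In in Ht. destruct Ht as [Ht1 Ht2].
        destruct (Hin t Ht1) as [E|E]; [|auto]. destruct (eqB (f t) c); [discriminate|congruence].
      - intros c' S HS HS'. apply (Hf c' S HS). intros t Ht. destruct (HS' t Ht) as [Ht1 Ht2].
        unfold T2 in Ht1. apply filter_In in Ht1. tauto. }
    simpl. lia.
Qed.

Lemma inj_len {A} (h : A -> nat) (S : list A) (bound : nat) : NoDup S ->
  (forall s1 s2, In s1 S -> In s2 S -> h s1 = h s2 -> s1 = s2) ->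
  (forall s, In s S -> (h s < bound)%nat) -> (length S <= bound)%nat.
Proof.
  intros HN Hi Hb. rewrite <- (length_map h S). replace bound with (length (seq 0 bound)) at 1 by apply length_seq.
  apply NoDup_incl_length.
  - apply NoDup_map_NoDup_ForallPairs; auto.
  - intros y Hy. apply in_map_iff in Hy. destruct Hy as [s [<- Hs]]. apply in_seq. specialize (Hb s Hs). lia.
Qed.

Lemma Int_ge (z : Z) r : IZR z <= r -> (z <= Int_part r)%Z.
Proof.
  intros H. destruct (base_Int_part r) as [H1 H2].
  assert (IZR z < IZR (Int_part r) + 1) by lra. rewrite <- plus_IZR in H0. apply lt_IZR in H0. lia.
Qed.

Lemma Int_lt (z : Z) r : r < IZR z -> (Int_part r + 1 <= z)%Z.
Proof.
  intros H. destruct (base_Int_part r) as [H1 H2].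
  assert (IZR (Int_part r) < IZR z) by lra. apply lt_IZR in H0. lia.
Qed.

Lemma coord_nest (t P s Rr : R) (kz Pint : Z) (yv zv : R) :
  0 < s -> IZR Pint = P -> s * P = t -> Rr * s = 1 ->
  t * IZR kz <= yv < t * (IZR kz + 1) ->
  s * IZR (Int_part (Rr * yv)) <= zv < s * (IZR (Int_part (Rr * yv)) + 1) ->
  t * IZR kz <= zv < t * (IZR kz + 1).
Proof.
  intros Hs HP Ht HR [Hy1 Hy2] [Hz1 Hz2].
  assert (HRt : Rr * t = P) by (rewrite <- Ht, <- Rmult_assoc, HR; ring).
  assert (HRp : 0 < Rr) by nra.
  assert (A1 : IZR (Pint * kz) <= Rr * yv).
  { rewrite mult_IZR, HP, <- HRt. nra. }
  assert (A2 : Rr * yv < IZR (Pint * (kz + 1))).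
  { rewrite mult_IZR, plus_IZR, HP, <- HRt. simpl. nra. }
  apply Int_ge in A1. apply Int_lt in A2.
  apply IZR_le in A1. apply IZR_le in A2. rewrite !mult_IZR, HP in A1.
  rewrite !mult_IZR, !plus_IZR, HP in A2. simpl in A2.
  split.
  - rewrite <- Ht. nra.
  - rewrite <- Ht. nra.
Qed.

Lemma pow_strict x y n : 0 <= x -> x < y -> (1 <= n)%nat -> x ^ n < y ^ n.
Proof.
  intros H0 H1 Hn. induction n. lia.
  destruct n. simpl. lra.
  assert (x ^ S n < y ^ S n) by (apply IHn; lia).
  change (x * x ^ S n < y * y ^ S n).
  assert (0 <= x ^ S n) by (apply pow_le; lra). nra.
Qed.

Lemma nth_map_seq (g : nat -> Z) d i : (i < d)%nat -> nth i (map g (seq 0 d)) 0%Z = g i.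
Proof.
  intros Hi. rewrite (nth_indep _ _ (g 0%nat)). rewrite map_nth, seq_nth; auto.
  rewrite length_map, length_seq. auto.
Qed.

Lemma floor_close P u v : 0 < P -> Int_part (P * u) = Int_part (P * v) -> Rabs (v - u) < / P.
Proof.
  intros HP E. destruct (base_Int_part (P * u)) as [A1 A2]. destruct (base_Int_part (P * v)) as [B1 B2].
  rewrite E in A1, A2.
  assert (Rabs (P * v - P * u) < 1) by (apply Rabs_def1; lra).
  replace (P * v - P * u) with (P * (v - u)) in H by ring.
  rewrite Rabs_mult, (Rabs_right P) in H by lra.
  apply (Rmult_lt_reg_l P); [lra|]. rewrite Rinv_r; lra.
Qed.

Lemma pz1 j0 J : powerRZ 2 (- (Z.of_nat j0 + Z.of_nat J)) = / 2 ^ (j0 + J).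
Proof. rewrite <- Nat2Z.inj_add. apply powerRZ_negnat. Qed.
Lemma pz2 d j0 J : powerRZ 2 (Z.of_nat d * (Z.of_nat j0 + Z.of_nat J)) = 2 ^ (d * (j0 + J)).
Proof. rewrite <- Nat2Z.inj_add, <- Nat2Z.inj_mul. apply powerRZ_nat. Qed.

Section Key.
Variables (d j0 J : nat) (a : nat -> nat) (x : vec) (k : list Z) (m : nat).
Hypothesis Hd : (1 <= d)%nat.
Hypothesis Ha0 : forall n, (1 <= n)%nat -> (0 < a n)%nat.
Hypothesis Ha1 : forall n m, (1 <= n)%nat -> (n < m)%nat -> (a n < a m)%nat.
Hypothesis Hk : length k = d.
Hypothesis Hcube : forall y, in_cube d (Z.of_nat j0) k y -> in_unit_cube d y.
Hypothesis Hm : (1 <= m)%nat.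
Let G := (j0 + J)%nat.
Let N := (2 ^ (d * G))%nat.
Hypothesis Hmk : INR m <= kappa_star d x ^ d * INR N.

Let xs := fun n => frac_vec (scal (INR (a n)) x).
Let f := fun n => map (fun i => Int_part (2 ^ G * xs n i)) (seq 0 d).

Lemma INR_N : INR N = 2 ^ (d * G).
Proof. unfold N. rewrite pow_INR. simpl INR. f_equal; lra. Qed.

Lemma gap n1 n2 : (1 <= n1)%nat -> (n1 < n2)%nat -> f n1 = f n2 -> (a n1 + m < a n2)%nat.
Proof.
  intros H1 H12 Hf.
  assert (Hlt : (a n1 < a n2)%nat) by (apply Ha1; auto).
  set (q := (a n2 - a n1)%nat).
  assert (Hq : INR q = INR (a n2) - INR (a n1)) by (unfold q; apply minus_INR; try lia).
  set (p := fun i => (Int_part (INR (a n2) * x i) - Int_part (INR (a n1) * x i))%Z).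
  assert (Hc : forall i, (i < d)%nat -> Rabs (INR q * x i - IZR (p i)) < / 2 ^ G).
  { intros i Hi.
    assert (E : Int_part (2 ^ G * xs n1 i) = Int_part (2 ^ G * xs n2 i)).
    { rewrite <- (nth_map_seq (fun i => Int_part (2 ^ G * xs n1 i)) d i Hi).
      rewrite <- (nth_map_seq (fun i => Int_part (2 ^ G * xs n2 i)) d i Hi).
      unfold f in Hf. rewrite Hf. reflexivity. }
    apply floor_close in E; [|apply p2_pos].
    replace (INR q * x i - IZR (p i)) with (xs n2 i - xs n1 i); auto.
    unfold xs, frac_vec, scal, frac_part, p. rewrite minus_IZR, Hq. ring. }
  assert (Hds : distZ d (scal (INR q) x) < / 2 ^ G).
  { eapply Rle_lt_trans; [apply (distZ_le d _ p)|]. apply supnorm_lt.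
    apply Rinv_0_lt_compat, p2_pos. intros i Hi. apply Hc; auto. }
  assert (Hq1 : (1 <= q)%nat) by (unfold q; lia).
  assert (HqR : 0 < INR q) by (apply lt_0_INR; lia).
  set (A := Rpower (INR q) (1 / INR d)).
  assert (HA : 0 < A) by (unfold A, Rpower; apply exp_pos).
  assert (Hkap : kappa_star d x < A * / 2 ^ G).
  { eapply Rle_lt_trans; [apply kappa_le; exact Hq1|]. fold A.
    apply Rmult_lt_compat_l; auto. }
  assert (Hpow : kappa_star d x ^ d < (A * / 2 ^ G) ^ d).
  { apply pow_strict; auto. apply kappa_nonneg. }
  rewrite Rpow_mult_distr in Hpow.
  assert (HAd : A ^ d = INR q).
  { unfold A. rewrite <- Rpower_pow by (unfold Rpower; apply exp_pos). rewrite Rpower_mult.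
    replace (1 / INR d * INR d) with 1. apply Rpower_1; auto.
    field. apply not_0_INR. lia. }
  rewrite HAd, pow_inv, <- pow_mult in Hpow.
  assert (HN : kappa_star d x ^ d * INR N < INR q).
  { rewrite INR_N. replace (d * G)%nat with (G * d)%nat by lia.
    pose proof (p2_pos (G * d)).
    apply (Rmult_lt_compat_r (2 ^ (G * d))) in Hpow; auto.
    rewrite Rmult_assoc, Rinv_l in Hpow; lra. }
  assert (INR m < INR q) by lra. apply INR_lt in H. unfold q in H. lia.
Qed.

Let Mpred := Mset d xs (Z.of_nat j0) k J.
Let Tpred := fun n : nat => (1 <= n <= N)%nat /\ in_cube d (Z.of_nat j0) k (xs n).

Lemma f_in_M n : Tpred n -> Mpred (f n).
Proof.
  intros [Hn Hin]. unfold Mpred, Mset. split; [|split].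
  - unfold f. rewrite length_map, length_seq. auto.
  - intros z Hz i Hi. specialize (Hz i Hi). specialize (Hin i Hi).
    rewrite pz1 in Hz. fold G in Hz. unfold f in Hz. rewrite nth_map_seq in Hz by auto.
    rewrite powerRZ_negnat in *.
    apply (coord_nest (/ 2 ^ j0) (2 ^ J) (/ 2 ^ G) (2 ^ G) (nth i k 0%Z) (Z.of_nat (2 ^ J)) (xs n i) (z i)); auto.
    + apply Rinv_0_lt_compat, p2_pos.
    + rewrite <- INR_IZR_INZ, pow_INR. simpl INR. f_equal; lra.
    + unfold G. rewrite pow_add. pose proof (p2_pos j0). pose proof (p2_pos J). field. lra.
    + apply Rinv_r. pose proof (p2_pos G). lra.
  - exists n. split; [lia|split].
    + rewrite pz2. fold G. rewrite <- INR_N. apply le_INR. lia.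
    + intros i Hi. rewrite pz1. fold G. unfold f. rewrite nth_map_seq by auto.
      destruct (base_Int_part (2 ^ G * xs n i)) as [B1 B2].
      pose proof (p2_pos G).
      split.
      * apply (Rmult_le_reg_l (2 ^ G)); auto. rewrite <- Rmult_assoc, Rinv_r; lra.
      * apply (Rmult_lt_reg_l (2 ^ G)); auto. rewrite <- Rmult_assoc, Rinv_r; lra.
Qed.

Lemma M_bound k' : Mpred k' -> In k' (allvec d (2 ^ G)).
Proof.
  intros [Hl [Hsub _]]. apply allvec_in; auto. intros i Hi.
  set (z := fun i => / 2 ^ G * IZR (nth i k' 0%Z)).
  assert (Hz : in_unit_cube d z).
  { apply Hcube. apply Hsub. intros i' Hi'. rewrite pz1. fold G. unfold z.
    pose proof (Rinv_0_lt_compat _ (p2_pos G)). split; nra. }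
  specialize (Hz i Hi). unfold z in Hz. pose proof (p2_pos G).
  destruct Hz as [Hz1 Hz2]. split.
  - apply le_IZR. apply (Rmult_le_reg_l (/ 2 ^ G)). apply Rinv_0_lt_compat; auto. lra.
  - apply lt_IZR. rewrite <- INR_IZR_INZ, pow_INR. simpl INR.
    replace (1 + 1) with 2 by ring.
    apply (Rmult_lt_reg_l (/ 2 ^ G)). apply Rinv_0_lt_compat; auto. rewrite Rinv_l; lra.
Qed.

Lemma key_count : (card Tpred <= (a N / m + 1) * card Mpred)%nat.
Proof.
  destruct (card_fin Mpred (allvec d (2 ^ G)) M_bound) as [lM [HM1 [HM2 [HM3 _]]]].
  destruct (card_fin Tpred (seq 1 N)) as [lT [HT1 [HT2 [HT3 _]]]].
  { intros t [Ht _]. apply in_seq. lia. }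
  rewrite HM3, HT3.
  apply (pigeon (list_eq_dec Z.eq_dec) f).
  - auto.
  - intros t Ht. apply HM2. apply f_in_M. apply HT2. auto.
  - intros c S HS HS'.
    apply (inj_len (fun n => a n / m)%nat); auto.
    + intros s1 s2 Hs1 Hs2 E.
      destruct (HS' s1 Hs1) as [T1 F1]. destruct (HS' s2 Hs2) as [T2 F2].
      apply HT2 in T1. apply HT2 in T2. destruct T1 as [T1 _]. destruct T2 as [T2 _].
      destruct (Nat.lt_trichotomy s1 s2) as [L|[L|L]]; auto; exfalso.
      * assert (G1 : (a s1 + m < a s2)%nat) by (apply gap; auto; lia || congruence).
        assert ((a s1 + 1 * m) / m <= a s2 / m)%nat by (apply Nat.Div0.div_le_mono; lia).
        rewrite Nat.div_add in H by lia. lia.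
      * assert (G1 : (a s2 + m < a s1)%nat) by (apply gap; auto; lia || congruence).
        assert ((a s2 + 1 * m) / m <= a s1 / m)%nat by (apply Nat.Div0.div_le_mono; lia).
        rewrite Nat.div_add in H by lia. lia.
    + intros s Hs. destruct (HS' s Hs) as [T1 _]. apply HT2 in T1. destruct T1 as [T1 _].
      assert (a s <= a N)%nat.
      { destruct (Nat.eq_dec s N); [subst; lia|]. specialize (Ha1 s N). lia. }
      assert (a s / m <= a N / m)%nat by (apply Nat.Div0.div_le_mono; auto). lia.
Qed.

Lemma M_le : (card Mpred <= N)%nat.
Proof.
  destruct (card_fin Mpred (allvec d (2 ^ G)) M_bound) as [lM [_ [_ [-> H]]]].
  rewrite allvec_len in H. unfold N. replace (d * G)%nat with (G * d)%nat by lia. rewrite Nat.pow_mul_r. exact H.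
Qed.
End Key.

Lemma Rdiv_le_0_compat a b : 0 <= a -> 0 < b -> 0 <= a / b.
Proof. intros. unfold Rdiv. apply Rmult_le_pos; auto. left; apply Rinv_0_lt_compat; auto. Qed.

Lemma ratio_bound (c N : nat) : (c <= N)%nat -> 0 <= INR c / INR N <= 1.
Proof.
  intros H. destruct N.
  - assert (c = 0%nat) by lia. subst. simpl. unfold Rdiv. rewrite Rmult_0_l. lra.
  - assert (0 < INR (S N)) by (apply lt_0_INR; lia). apply le_INR in H.
    pose proof (pos_INR c). split.
    + apply Rdiv_le_0_compat; lra.
    + apply (Rmult_le_reg_r (INR (S N))); auto. unfold Rdiv. rewrite Rmult_assoc, Rinv_l; lra.
Qed.

Lemma n_lt_pow n : (n < 2 ^ n)%nat.
Proof. apply Nat.pow_gt_lin_r. lia. Qed.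

Theorem main (d : nat) (a : nat -> nat) (x : vec) (j0 : nat) (k : list Z) :
  (1 <= d)%nat ->
  (forall n, (1 <= n)%nat -> (0 < a n)%nat) ->
  (forall n m, (1 <= n)%nat -> (n < m)%nat -> (a n < a m)%nat) ->
  length k = d ->
  (forall y, in_cube d (Z.of_nat j0) k y -> in_unit_cube d y) ->
  liminf (fun J : nat =>
            powerRZ 2 (- (Z.of_nat d * Z.of_nat J)) *
            INR (card (Mset d (fun n => frac_vec (scal (INR (a n)) x)) (Z.of_nat j0) k J)))
  >= (kappa_star d x ^ d * lower_density a) / (2 ^ d * cube_measure d (Z.of_nat j0))
     * lower_freq d (fun n => scal (INR (a n)) x) (Z.of_nat j0) k.
Proof.
  intros Hd Ha0 Ha1 Hk Hcube.
  set (v := fun N => INR (card (fun n : nat => (1 <= n)%nat /\ (a n <= N)%nat)) / INR N).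
  set (r := fun N => INR (card (fun n : nat => (1 <= n <= N)%nat /\ in_cube d (Z.of_nat j0) k (frac_vec (scal (INR (a n)) x)))) / INR N).
  set (u := fun J : nat => powerRZ 2 (- (Z.of_nat d * Z.of_nat J)) *
            INR (card (Mset d (fun n => frac_vec (scal (INR (a n)) x)) (Z.of_nat j0) k J))).
  assert (Hv : forall N, 0 <= v N <= 1).
  { intro N. apply ratio_bound. apply card_le_seq. intros n [H1 H2].
    pose proof (a_ge a Ha0 Ha1 n). lia. }
  assert (Hr : forall N, 0 <= r N <= 1).
  { intro N. apply ratio_bound. apply card_le_seq. intros n [H1 H2]. lia. }
  assert (Hpz : forall J, powerRZ 2 (- (Z.of_nat d * Z.of_nat J)) = / 2 ^ (d * J)).
  { intro J. rewrite <- Nat2Z.inj_mul. apply powerRZ_negnat. }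
  assert (Hu : forall J, 0 <= u J <= 2 ^ (d * j0)).
  { intro J. unfold u. rewrite Hpz. pose proof (p2_pos (d * J)).
    pose proof (pos_INR (card (Mset d (fun n => frac_vec (scal (INR (a n)) x)) (Z.of_nat j0) k J))).
    pose proof (M_le d j0 J a x k 1 Hd Hk Hcube (le_n 1)) as HM. apply le_INR in HM.
    rewrite INR_N in HM. rewrite Nat.mul_add_distr_l, pow_add in HM.
    pose proof (Rinv_0_lt_compat _ H).
    split. apply Rmult_le_pos; lra.
    apply (Rmult_le_reg_l (2 ^ (d * J))); auto. rewrite <- Rmult_assoc, Rinv_r by lra. lra. }
  fold u.
  set (kap := kappa_star d x). set (del := lower_density a).
  set (rho := lower_freq d (fun n => scal (INR (a n)) x) (Z.of_nat j0) k).
  assert (Hdel0 : 0 <= del).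
  { apply Rge_le. apply (liminf_ge v 0 1 Hv). intros e He. exists 0%nat. intros n _. specialize (Hv n). lra. }
  assert (Hdel1 : del <= 1) by (apply (liminf_le v 0 1 Hv); intro n; apply Hv).
  assert (Hrho0 : 0 <= rho).
  { apply Rge_le. apply (liminf_ge r 0 1 Hr). intros e He. exists 0%nat. intros n _. specialize (Hr n). lra. }
  assert (Hk0 : 0 <= kap) by apply kappa_nonneg.
  assert (Hk1 : kap <= 1/2) by apply kappa_half.
  set (X := kap ^ d).
  assert (HX0 : 0 <= X) by (apply pow_le; auto).
  assert (HX1 : X <= 1/2).
  { unfold X. replace d with (S (d - 1)) by lia. simpl.
    pose proof (pow_incr kap 1 (d - 1) ltac:(lra)). rewrite pow1 in H.
    pose proof (pow_le kap (d - 1) Hk0). nra. }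
  assert (H2d : 2 <= 2 ^ d).
  { replace d with (S (d - 1)) by lia. simpl. pose proof (pow_R1_Rle 2 (d - 1)). lra. }
  assert (Hcm : cube_measure d (Z.of_nat j0) = / 2 ^ (d * j0)).
  { unfold cube_measure. rewrite <- Nat2Z.inj_mul. apply powerRZ_negnat. }
  rewrite Hcm.
  pose proof (p2_pos (d * j0)) as Hpj.
  set (C := X * del / (2 ^ d * / 2 ^ (d * j0))).
  assert (HC : C = X * del * 2 ^ (d * j0) / 2 ^ d).
  { unfold C. field. lra. }
  assert (HC0 : 0 <= C). { rewrite HC. apply Rdiv_le_0_compat. apply Rmult_le_pos; [apply Rmult_le_pos|]; lra. lra. }
  apply (liminf_ge u 0 (2 ^ (d * j0)) Hu). intros eps Heps.
  destruct (Req_dec (X * del) 0) as [Hz|Hz].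
  { exists 0%nat. intros n _. rewrite HC, Hz. specialize (Hu n). unfold Rdiv. lra. }
  assert (HXp : 0 < X) by (destruct HX0; auto; subst; rewrite <- H in Hz; lra).
  assert (Hdp : 0 < del) by (destruct Hdel0; auto; rewrite <- H in Hz; lra).
  set (e' := eps / (C + 1)).
  assert (He' : 0 < e') by (unfold e'; apply Rdiv_lt_0_compat; lra).
  destruct (liminf_ev r 0 1 Hr e' He') as [Nr HNr].
  destruct (liminf_ev v 0 1 Hv (del / 4) ltac:(lra)) as [M0 HM0].
  change (liminf r) with rho in HNr. change (liminf v) with del in HM0.
  destruct (archimed (12 / X)) as [Hup _].
  set (T := Z.to_nat (up (12 / X))).
  assert (HT : 12 / X < INR T).
  { unfold T. destruct (Z_lt_le_dec (up (12 / X)) 0).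
    - exfalso. apply IZR_lt in l. assert (0 < 12 / X) by (apply Rdiv_lt_0_compat; lra). lra.
    - rewrite INR_IZR_INZ, Z2Nat.id by auto. lra. }
  exists (Nr + M0 + T + 2)%nat. intros J HJ.
  set (G := (j0 + J)%nat). set (N := (2 ^ (d * G))%nat).
  assert (HNJ : (J < N)%nat).
  { pose proof (n_lt_pow J). assert (2 ^ J <= N)%nat; [|lia].
    unfold N. apply Nat.pow_le_mono_r. lia. unfold G. nia. }
  assert (HNR : INR T < INR N) by (apply lt_INR; lia).
  assert (HXN : 12 <= X * INR N).
  { apply (Rmult_lt_compat_l X) in HT; auto. unfold Rdiv in HT.
    rewrite <- Rmult_assoc, (Rmult_comm X 12), Rmult_assoc, Rinv_r in HT by lra. nra. }
  destruct (base_Int_part (X * INR N)) as [F1 F2].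
  set (mz := Int_part (X * INR N)) in *.
  assert (Hmz : (1 <= mz)%Z) by (apply le_IZR; lra).
  set (m := Z.to_nat mz).
  assert (HmR : INR m = IZR mz) by (unfold m; rewrite INR_IZR_INZ, Z2Nat.id by lia; auto).
  assert (Hm1 : (1 <= m)%nat) by (unfold m; lia).
  assert (Hmk : INR m <= kappa_star d x ^ d * INR (2 ^ (d * (j0 + J)))).
  { fold kap X. fold G N. lra. }
  pose proof (key_count d j0 J a x k m Hd Ha1 Hk Hcube Hm1 Hmk) as KC.
  fold G N in KC.
  set (cN := card (fun n : nat => (1 <= n <= N)%nat /\ in_cube d (Z.of_nat j0) k (frac_vec (scal (INR (a n)) x)))) in *.
  set (MJ := card (Mset d (fun n : nat => frac_vec (scal (INR (a n)) x)) (Z.of_nat j0) k J)) in *.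
  set (K := (a N / m + 1)%nat) in *.
  assert (HaN : (N <= a N)%nat) by apply (a_ge a Ha0 Ha1).
  assert (Hdens : 3 * del / 4 * INR (a N - 1) < INR N).
  { assert (HM : (M0 <= a N - 1)%nat) by lia.
    specialize (HM0 (a N - 1)%nat HM). unfold v in HM0.
    assert (Hc : (card (fun n : nat => (1 <= n)%nat /\ (a n <= a N - 1)%nat) <= N - 1)%nat).
    { apply card_le_seq. intros n [H1 H2]. split; auto.
      destruct (Nat.lt_ge_cases n N); [lia|]. exfalso.
      destruct (Nat.eq_dec n N). subst. lia. specialize (Ha1 N n). lia. }
    apply le_INR in Hc. rewrite minus_INR in Hc by lia.
    assert (0 < INR (a N - 1)) by (apply lt_0_INR; lia).
    apply (Rmult_gt_compat_r (INR (a N - 1))) in HM0; auto.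
    unfold Rdiv in HM0. rewrite Rmult_assoc, Rinv_l in HM0 by lra. simpl INR in Hc. lra. }
  rewrite minus_INR in Hdens by lia. simpl INR in Hdens.
  assert (HKm : INR K * INR m <= INR (a N) + INR m).
  { unfold K. rewrite <- mult_INR, <- plus_INR. apply le_INR.
    pose proof (Nat.Div0.mul_div_le (a N) m). nia. }
  assert (HmP : 0 < INR m) by (apply lt_0_INR; lia).
  assert (HK : INR K * (X * del) <= 2 ^ d).
  { assert (P1 : INR (a N) * (X * del) * 3 / 4 < X * INR N + 3 * (X * del) / 4).
    { assert (3 * del / 4 * (INR (a N) - 1) * X < INR N * X) by (apply Rmult_lt_compat_r; auto).
      nra. }
    assert (P2 : INR (a N) * (X * del) <= 3 / 2 * INR m).
    { assert (X * del <= 1/2) by nra. nra. }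
    assert (P3 : INR K * (X * del) * INR m <= (3/2 + X * del) * INR m).
    { assert (0 <= X * del) by nra. nra. }
    apply Rmult_le_reg_r in P3; auto. assert (X * del <= 1/2) by nra. lra. }
  assert (HcN : INR cN * (X * del) <= 2 ^ d * INR MJ).
  { apply le_INR in KC. rewrite mult_INR in KC. pose proof (pos_INR MJ).
    assert (0 <= X * del) by nra. nra. }
  assert (HNr' : r N > rho - e') by (apply HNr; lia).
  assert (HNpos : 0 < INR N) by (apply lt_0_INR; lia).
  assert (HcN2 : (rho - e') * INR N < INR cN).
  { unfold r in HNr'. fold cN in HNr'. apply (Rmult_gt_compat_r (INR N)) in HNr'; auto.
    unfold Rdiv in HNr'. rewrite Rmult_assoc, Rinv_l in HNr' by lra. lra. }
  unfold u. rewrite Hpz. fold MJ.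
  assert (HNeq : INR N = 2 ^ (d * j0) * 2 ^ (d * J)).
  { unfold N, G. rewrite INR_N, Nat.mul_add_distr_l, pow_add. auto. }
  pose proof (p2_pos (d * J)) as HpJ.
  assert (Hgoal : C * (rho - e') <= / 2 ^ (d * J) * INR MJ).
  { rewrite HC.
    assert (S1 : (rho - e') * INR N * (X * del) <= 2 ^ d * INR MJ).
    { assert (0 <= X * del) by nra. nra. }
    rewrite HNeq in S1.
    apply (Rmult_le_reg_l (2 ^ d * 2 ^ (d * J))). nra.
    replace (2 ^ d * 2 ^ (d * J) * (X * del * 2 ^ (d * j0) / 2 ^ d * (rho - e')))
      with ((rho - e') * (2 ^ (d * j0) * 2 ^ (d * J)) * (X * del)) by (field; lra).
    replace (2 ^ d * 2 ^ (d * J) * (/ 2 ^ (d * J) * INR MJ)) with (2 ^ d * INR MJ) by (field; lra).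
    exact S1. }
  assert (C * e' <= eps).
  { unfold e'. apply (Rmult_le_reg_r (C + 1)). lra. unfold Rdiv.
    rewrite Rmult_assoc, (Rmult_assoc eps), Rinv_l by lra. nra. }
  apply Rle_ge. fold C. nra.
Qed.

Theorem proposition11p5 (d : nat) (a : nat -> nat) (x : vec) (j : Z) (k : list Z) :
  (1 <= d)%nat ->
  (forall n, (1 <= n)%nat -> (0 < a n)%nat) ->
  (forall n m, (1 <= n)%nat -> (n < m)%nat -> (a n < a m)%nat) ->
  length k = d ->
  (forall y, in_cube d j k y -> in_unit_cube d y) ->
  liminf (fun J : nat =>
            powerRZ 2 (- (Z.of_nat d * Z.of_nat J)) *
            INR (card (Mset d (fun n => frac_vec (scal (INR (a n)) x)) j k J)))
  >= (kappa_star d x ^ d * lower_density a) / (2 ^ d * cube_measure d j)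
     * lower_freq d (fun n => scal (INR (a n)) x) j k.
Proof.
  intros Hd Ha0 Ha1 Hk Hcube.
  pose proof (j_nonneg d j k Hd Hcube) as Hj.
  rewrite <- (Z2Nat.id j Hj) in *.
  apply main; auto.
Qed.
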